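(* Let $p$ be a prime and let $q$ be an integer with $\gcd(q,p)=1$. For $n\geq 1$ let $\Gamma_{p,n,q}$ be the directed graph with vertex set $\mathbb{Z}_{p^n}=\{0,1,\dots,p^n-1\}$ and edge set $$E=\{(x,\, q^y \bmod p^n)\;:\; x\in\mathbb{Z}_{p^n},\ y\in\mathbb{Z}_{\geq 0},\ y\equiv x \pmod{p^n}\},$$ and let $A_n$ be its adjacency matrix, with rows and columns indexed by $0,1,\dots,p^n-1$ in increasing order. Then: (1) If $q$ is a primitive root modulo $p$, then $A_1$ is the $p\times p$ matrix whose first column (index $0$) is zero and all of whose other entries equal $1$. If $q$ is not a primitive root modulo $p$, then $A_1$ is obtained from this matrix by changing some entries $1$ to $0$. (2) For $n>1$, writing $A_n$ in $p\times p$ block form with blocks of size $p^{n-1}\times p^{n-1}$ (block $b\in\{0,\dots,p-1\}$ corresponding to indices $bp^{n-1},\dots,(b+1)p^{n-1}-1$), there exist matrices $B_1^n,\dots,B_p^n\in\mathrm{Mat}_{p^{n-1}\times p^{n-1}}(\mathbb{Z})$ such that $$A_n=\begin{pmatrix} B_1^n & B_2^n &\dots & B_p^n \\ B_1^n & B_2^n &\dots & B_p^n \\ \vdots &\vdots & &\vdots \\ B_1^n & B_2^n &\dots & B_p^n \end{pmatrix}$$ (every block row is the same) and $B_1^n+B_2^n+\dots+B_p^n=A_{n-1}$.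
   Context: Here $q^y \bmod p^n$ denotes the representative of $q^y$ modulo $p^n$ in $\{0,1,\dots,p^n-1\}$. The adjacency matrix has entry $1$ in position $(x,z)$ if $(x,z)$ is an edge and $0$ otherwise. *)

(* Defs.v *)
From Stdlib Require Import ClassicalDescription.
From mathcomp Require Import all_boot all_order all_algebra.
Set Implicit Arguments. Unset Strict Implicit. Unset Printing Implicit Defensive.
Import Order.TTheory GRing.Theory Num.Theory.
Local Open Scope ring_scope.

Definition prim_root_mod (p : nat) (q : int) : Prop :=
  (q ^+ p.-1 = 1 %[mod p%:Z])%Z /\
  forall k : nat, (0 < k < p.-1)%N -> (q ^+ k <> 1 %[mod p%:Z])%Z.

Definition edge (p n : nat) (q : int) (x z : nat) : Prop :=
  exists y : nat, (y %% p ^ n = x)%N /\ (q ^+ y %% (p ^ n)%:Z)%Z = z%:Z.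

Definition adjf (p n : nat) (q : int) (x z : nat) : int :=
  if excluded_middle_informative (edge p n q x z) then 1 else 0.

Definition adj (p n : nat) (q : int) : 'M[int]_(p ^ n) :=
  \matrix_(i, j) adjf p n q i j.

Definition J1 (p : nat) : 'M[int]_(p ^ 1) :=
  \matrix_(i, j) (if nat_of_ord j == 0%N then 0 else 1).

(* Main.v *)
Require Import Defs.
From mathcomp Require Import all_boot all_order all_algebra zify.
From Stdlib Require Import Classical ClassicalDescription.
Import Order.TTheory GRing.Theory Num.Theory.

Open Scope nat_scope.

Lemma cancel_mod a u v K : coprime a K -> a * u = a * v %[mod K] -> u = v %[mod K].
Proof.
move=> cop.
wlog le: u v / u <= v => [W|].
  case: (leqP u v) => h H; first exact: W.
  by apply/esym; apply: W; [exact: ltnW | rewrite H].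
move=> H; apply/eqP; rewrite eq_sym eqn_mod_dvd //.
move/eqP: H; rewrite eq_sym eqn_mod_dvd ?leq_mul2l ?le ?orbT // -mulnBr.
by rewrite Gauss_dvdr // coprime_sym.
Qed.

Lemma shift_mod P r T y s : r ^ T = 1 %[mod P] -> r ^ (y + s * T) = r ^ y %[mod P].
Proof.
move=> H; rewrite expnD (mulnC s T) expnM -modnMmr -modnXm H modnXm exp1n modnMmr muln1.
by [].
Qed.

Lemma binom_mod c K e : exists t, (1 + c * K) ^ e = 1 + e * c * K + K * K * t.
Proof.
elim: e => [|e [t IH]]; first by exists 0; rewrite expn0; lia.
exists (t + e * c * c + c * K * t); rewrite expnS IH; lia.
Qed.

Lemma lift_mod p K w e : 1 < K -> p %| K -> w %% K = 1 ->
  exists c, w = 1 + c * K /\ w ^ e = 1 + e * c * K %[mod p * K].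
Proof.
move=> K1 pK wK; set c := w %/ K.
have wE : w = 1 + c * K by rewrite {1}(divn_eq w K) wK addnC.
exists c; split => //; rewrite {1}wE.
have [t ->] := binom_mod c K e.
case/dvdnP: pK => k Kk.
have -> : K * K * t = (k * t) * (p * K) by rewrite {1}Kk; lia.
by rewrite addnC modnMDl.
Qed.

Lemma lift_pow p K w : 1 < K -> p %| K -> w %% K = 1 -> w ^ p = 1 %[mod p * K].
Proof.
move=> K1 pK wK; have [c [_ ->]] := lift_mod p K w p K1 pK wK.
have -> : p * c * K = c * (p * K) by lia.
by rewrite addnC modnMDl.
Qed.

Lemma lift_unique p K w : prime p -> 1 < K -> p %| K -> w %% K = 1 ->
   w ^ p.-1 = 1 %[mod p * K] -> w = 1 %[mod p * K].
Proof.
move=> pp K1 pK wK.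
have [c [wE ->]] := lift_mod p K w p.-1 K1 pK wK.
move/eqP; rewrite eqn_mod_dvd ?leq_addr // addKn => H.
have H2 : p %| p.-1 * c.
  have K0 : 0 < K by lia.
  by rewrite -(@dvdn_pmul2r K) // -mulnA (mulnC K).
have cp : coprime p p.-1.
  rewrite prime_coprime // gtnNdvd //; have := prime_gt1 pp; lia.
rewrite Gauss_dvdr // in H2; case/dvdnP: H2 => c' cE; rewrite wE cE.
by rewrite -mulnA addnC modnMDl.
Qed.

Lemma euler_pk p r : prime p -> coprime r p -> forall j, r ^ (p.-1 * p ^ j) = 1 %[mod p ^ j.+1].
Proof.
move=> pp rp; have p1 := prime_gt1 pp.
elim=> [|j IH].
  rewrite expn0 muln1 expn1; apply: (@cancel_mod r); first exact: rp.
  rewrite muln1 -expnS prednK ?fermat_little //; lia.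
have K1 : 1 < p ^ j.+1 by rewrite -[1](exp1n j.+1) ltn_exp2r.
rewrite (expnS p j.+1) (expnS p j) mulnCA mulnC expnM.
apply: lift_pow => //; first by rewrite -expnS.
  by rewrite dvdn_mulr.
by rewrite -expnS IH modn_small.
Qed.

Definition E P r x z := exists y, y %% P = x /\ r ^ y %% P = z.

Lemma conv (q : int) (r P : nat) : (q = r%:Z %[mod P])%Z ->
  forall y, (q ^+ y %% P)%Z = (r ^ y %% P)%N.
Proof.
move=> H y; rewrite -modzXm H modzXm -modz_nat; congr (_ %% _)%Z; lia.
Qed.

Lemma edgeE (p k : nat) (q : int) (r : nat) : (q = r%:Z %[mod (p ^ k)%N])%Z ->
  forall x z, edge p k q x z <-> E (p ^ k) r x z.
Proof.
move=> H x z; rewrite /edge /E; split => -[y [h1 h2]]; exists y; split => //.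
  by move: h2; rewrite (@conv q r (p ^ k) H); case.
by rewrite (@conv q r (p ^ k) H) h2.
Qed.

Lemma modz_sub (q : int) (r P P' : nat) : (P' %| P)%N -> (q = r%:Z %[mod P])%Z ->
  (q = r%:Z %[mod P'])%Z.
Proof.
move=> d /eqP H; apply/eqP; rewrite eqz_mod_dvd in H *.
rewrite eqz_mod_dvd; apply: (dvdz_trans _ H); by rewrite /dvdz /=.
Qed.

Lemma choose_r (q : int) (P : nat) : (0 < P)%N ->
  (q = `|(q %% P)%Z|%N %[mod P])%Z.
Proof.
move=> P0; rewrite gez0_abs ?modz_mod // modz_ge0 //; lia.
Qed.

Lemma coprime_r (q : int) (p r : nat) : prime p -> coprimez q p -> (q = r%:Z %[mod p])%Z ->
  coprime r p.
Proof.
move=> pp cq H; rewrite coprime_sym prime_coprime //; apply/negP => pr.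
have : (p %| q)%Z.
  apply/dvdz_mod0P; rewrite H modz_nat.
  by move/dvdnP: pr => [k ->]; rewrite modnMl.
rewrite /dvdz /= => pq.
move: cq; rewrite coprimezE /= => cq.
have := coprime_dvdl pq cq; rewrite /coprime gcdnn => /eqP p1.
by move: (prime_gt1 pp); rewrite p1.
Qed.

Lemma powT p r m : prime p -> coprime r p ->
  r ^ (p.-1 * p ^ m * p.-1) = 1 %[mod p ^ m.+1].
Proof.
move=> pp rp; by rewrite expnM -modnXm euler_pk // modnXm exp1n.
Qed.

Lemma factA p r m x z : prime p -> coprime r p -> x < p ^ m.+1 ->
  (exists y, y %% p ^ m = x %% p ^ m /\ r ^ y %% p ^ m.+1 = z) -> E (p ^ m.+1) r x z.
Proof.
move=> pp rp xM [y [yx yz]].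
have p2 := prime_gt1 pp.
set K := p ^ m; have MK : p ^ m.+1 = p * K by rewrite expnS.
have K0 : 0 < K by rewrite expn_gt0; lia.
set T := p.-1 * K * p.-1.
set a := x %/ K; set w := y %/ K; set v := x %% K.
have xE : x = a * K + v by rewrite /a /v -divn_eq.
have yE : y = w * K + v by rewrite /w /v -yx -divn_eq.
set s := a + p.-1 * w.
exists (y + s * T); split; last by rewrite -yz shift_mod // powT.
have [p' pE] : exists p', p = p'.+2 by exists (p - 2); lia.
have eq : y + s * T = x + p ^ m.+1 * (w + s * p').
  rewrite MK yE xE /s /T pE /=; lia.
by rewrite eq mulnC addnC modnMDl modn_small.
Qed.

Lemma uniqA p r m y0 y1 : prime p -> coprime r p -> 0 < m ->
  y0 %% p ^ m = y1 %% p ^ m -> r ^ y0 = r ^ y1 %[mod p ^ m] ->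
  r ^ y0 = r ^ y1 %[mod p ^ m.+1].
Proof.
move=> pp rp m0.
wlog le: y0 y1 / y0 <= y1 => [W|].
  case: (leqP y0 y1) => h H1 H2; first exact: W.
  by apply/esym; apply: W; [exact: ltnW | rewrite H1 | rewrite H2].
move=> H1 H2.
have p2 := prime_gt1 pp.
set K := p ^ m; have MK : p ^ m.+1 = p * K by rewrite expnS.
have K1 : 1 < K by rewrite -[1](exp1n m) ltn_exp2r //; lia.
have : K %| y1 - y0 by rewrite -eqn_mod_dvd // H1.
case/dvdnP => d dE.
have y1E : y1 = y0 + d * K by lia.
set w := r ^ (d * K).
have r1 : r ^ y1 = r ^ y0 * w by rewrite y1E expnD.
have wK : w %% K = 1.
  rewrite -(modn_small K1); apply: (@cancel_mod (r ^ y0)).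
    by apply: coprimeXl; rewrite /K coprime_pexpr //.
  by rewrite muln1 -r1 H2.
have wM : w = 1 %[mod p * K].
  apply: lift_unique => //; first by rewrite /K dvdn_exp.
  rewrite /w -expnM.
  have -> : d * K * p.-1 = p.-1 * K * d by lia.
  by rewrite expnM -MK -modnXm euler_pk // modnXm exp1n.
by rewrite MK r1 -modnMmr wM modnMmr muln1.
Qed.

Lemma fermat1 p r : prime p -> coprime r p -> r ^ p.-1 = 1 %[mod p].
Proof. by move=> pp rp; have := @euler_pk p r pp rp 0; rewrite expn0 muln1 expn1. Qed.

Lemma nz_pow p r k : prime p -> coprime r p -> r ^ k %% p != 0.
Proof.
move=> pp rp; apply/negP => /eqP H.
have pd : p %| r ^ k by rewrite /dvdn H.
have := coprime_dvdl pd (coprimeXl k rp); rewrite /coprime gcdnn => /eqP p1.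
by move: (prime_gt1 pp); rewrite p1.
Qed.

Lemma edge1 p r x z : prime p -> coprime r p -> x < p ->
  E (p ^ 1) r x z <-> exists k, r ^ k %% p = z.
Proof.
move=> pp rp xp; rewrite /E expn1; split => [[y [_ h]]|[k h]]; first by exists y.
have p2 := prime_gt1 pp.
set s := k + p.-1 * x.
exists (k + s * p.-1); split; last by rewrite -h shift_mod // fermat1.
have [p' pE] : exists p', p = p'.+2 by exists (p - 2); lia.
have -> : k + s * p.-1 = x + (k + x * p') * p by rewrite /s pE /=; lia.
by rewrite addnC modnMDl modn_small.
Qed.

Definition fo p r (p0 : 0 < p) (k : nat) : 'I_p := Ordinal (ltn_pmod (r ^ k) p0).

Lemma prim_surj p r : prime p -> coprime r p ->
  (forall k, 0 < k < p.-1 -> r ^ k %% p != 1) ->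
  forall z, 0 < z < p -> exists k, r ^ k %% p = z.
Proof.
move=> pp rp prim z /andP [z0 zp].
have p0 : 0 < p by apply: prime_gt0.
pose f (k : 'I_p.-1) := @fo p r p0 k.
have finj : injective f.
  move=> a b /(congr1 val) /= eab; apply/val_inj => /=.
  wlog le : a b eab / a <= b => [W|].
    by case: (leqP a b) => h; [exact: (W a b eab h) | apply/esym; exact: (W b a (esym eab) (ltnW h))].
  rewrite leq_eqVlt in le; case/orP: le => [/eqP //|ab].
  have H : r ^ (b - a) = 1 %[mod p].
    apply: (@cancel_mod (r ^ a)); first exact: coprimeXl.
    have ab' : a <= b := ltnW ab.
    by rewrite -expnD (subnKC ab') muln1 eab.
  have bp := ltn_ord b.
  have c1 : 0 < b - a < p.-1 by apply/andP; split; lia.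
  have := prim _ c1; rewrite H modn_small ?prime_gt1 // eqxx; by [].
pose S := [set f k | k : 'I_p.-1].
pose z0' := (Ordinal p0 : 'I_p) .
have SN : S \subset [set~ (Ordinal (prime_gt0 pp) : 'I_p)].
  apply/subsetP => u /imsetP [k _ ->]; rewrite in_setC1; apply/negP => /eqP /(congr1 val) /=.
  by apply/eqP; apply: nz_pow.
have cS : #|S| = p.-1 by rewrite card_imset // card_ord.
have eqS : S = [set~ (Ordinal (prime_gt0 pp) : 'I_p)].
  by apply/eqP; rewrite eqEcard SN cardsC1 card_ord cS leqnn.
have : (Ordinal zp : 'I_p) \in S.
  rewrite eqS in_setC1; apply/negP => /eqP /(congr1 val) /=; lia.
by case/imsetP => k _ /(congr1 val) /= ->; exists k.
Qed.

Lemma nonprim p r k0 : prime p -> coprime r p -> 0 < k0 < p.-1 -> r ^ k0 %% p = 1 ->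
  exists z, 0 < z < p /\ forall y, r ^ y %% p != z.
Proof.
move=> pp rp /andP [k00 k0p] rk.
have p0 : 0 < p by apply: prime_gt0.
pose g (k : 'I_k0) := @fo p r p0 k.
pose S := [set g k | k : 'I_k0].
have cS : #|S| <= k0 by rewrite -[k0 in _ <= k0]card_ord leq_imset_card.
have : ~~ ([set~ (Ordinal p0 : 'I_p)] \subset S).
  apply/negP => /subset_leq_card; rewrite cardsC1 card_ord; lia.
case/subsetPn => u; rewrite in_setC1 => u0 uS.
exists u; split.
  rewrite ltn_ord andbT lt0n; apply: contra u0 => /eqP h.
  by apply/eqP; apply: val_inj.
move=> y; apply/negP => /eqP yu; move/negP: uS; apply.
have yE : y = y %% k0 + (y %/ k0) * k0 by rewrite addnC -divn_eq.
apply/imsetP; exists (Ordinal (ltn_pmod y k00)) => //; apply: val_inj => /=.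
rewrite -yu {1}yE shift_mod // rk modn_small //; exact: prime_gt1.
Qed.

Lemma Ered p r m x z : prime p -> coprime r p -> x < p ^ m.+1 ->
  (E (p ^ m.+1) r x z <-> exists y, y %% p ^ m = x %% p ^ m /\ r ^ y %% p ^ m.+1 = z).
Proof.
move=> pp rp xM; split; last exact: factA.
move=> [y [h1 h2]]; exists y; split => //.
by rewrite -h1 modn_dvdm // dvdn_exp2l.
Qed.

Lemma adjf_ext p n q x x' z z' : (edge p n q x z <-> edge p n q x' z') ->
  adjf p n q x z = adjf p n q x' z'.
Proof.
rewrite /adjf => H.
by case: excluded_middle_informative => h1; case: excluded_middle_informative => h2 //;
  exfalso; tauto.
Qed.

Lemma adjf1 p n q x z : edge p n q x z -> adjf p n q x z = 1%R.
Proof. by rewrite /adjf; case: excluded_middle_informative. Qed.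

Lemma adjf0 p n q x z : ~ edge p n q x z -> adjf p n q x z = 0%R.
Proof. by rewrite /adjf; case: excluded_middle_informative. Qed.

Local Open Scope ring_scope.

Theorem lemma5 (p : nat) (q : int) (hp : prime p) (hq : coprimez q p%:Z) :
  (* (1) *)
  (prim_root_mod p q -> adj p 1 q = J1 p) /\
  (~ prim_root_mod p q ->
     (forall i j, adj p 1 q i j <= J1 p i j) /\ adj p 1 q <> J1 p) /\
  (* (2) *)
  (forall n : nat, (1 < n)%N ->
     exists B : 'I_p -> 'M[int]_(p ^ n.-1),
       (forall (a b : 'I_p) (i j : 'I_(p ^ n.-1)),
          adjf p n q (a * p ^ n.-1 + i) (b * p ^ n.-1 + j) = B b i j) /\
       \sum_(b < p) B b = adj p n.-1 q).
Proof.
have p1 := prime_gt1 hp; have p0 := prime_gt0 hp.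
pose r1 := `|(q %% (p ^ 1)%N%:Z)%Z|%N.
have qr1 : (q = r1%:Z %[mod (p ^ 1)%N])%Z by apply: choose_r; rewrite expn1.
have qr1' : (q = r1%:Z %[mod p])%Z by move: qr1; rewrite expn1.
have cr1 : coprime r1 p := @coprime_r q p r1 hp hq qr1'.
have E1 : forall x z, (x < p)%N -> (edge p 1 q x z <-> exists k, (r1 ^ k %% p)%N = z).
  by move=> x z xp; rewrite (@edgeE p 1 q r1 qr1) edge1.
have C1 : forall k, (q ^+ k = 1 %[mod p])%Z <-> (r1 ^ k %% p)%N = 1%N.
  move=> k; rewrite (@conv q r1 p qr1') modz_nat (modn_small p1); split; first by case.
  by move=> ->.
have ord1 : forall i : 'I_(p ^ 1), (i < p)%N by move=> i; rewrite -{2}(expn1 p).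
split.
  move=> [_ prim]; apply/matrixP => i j; rewrite !mxE.
  have prim' : forall k, (0 < k < p.-1)%N -> (r1 ^ k %% p)%N != 1%N.
    by move=> k /prim h; apply/eqP => /C1.
  case: (classic (edge p 1 q i j)) => e.
    rewrite adjf1 //; case/(E1 _ _ (ord1 i)): e => k hk.
    by have := @nz_pow p r1 k hp cr1; rewrite hk => /negbTE ->.
  rewrite adjf0 //; case: eqP => // /eqP j0; exfalso; apply: e.
  apply/(E1 _ _ (ord1 i)); apply: prim_surj => //.
  by rewrite lt0n j0 ord1.
split.
  move=> np.
  have [k0 [k0b k0r]] : exists k0, (0 < k0 < p.-1)%N /\ (r1 ^ k0 %% p)%N = 1%N.
    apply: NNPP => nex; apply: np; split.
      by apply/C1; rewrite (@fermat1 p r1 hp cr1) modn_small.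
    move=> k kb /C1 kr; apply: nex; exists k; split => //.
  have [z [zb zn]] := @nonprim p r1 k0 hp cr1 k0b k0r.
  split.
    move=> i j; rewrite !mxE.
    case: (classic (edge p 1 q i j)) => e; last first.
      by rewrite adjf0 //; case: ifP.
    rewrite adjf1 //; case/(E1 _ _ (ord1 i)): e => k hk.
    by have := @nz_pow p r1 k hp cr1; rewrite hk => /negbTE ->.
  have zp1 : (z < p ^ 1)%N by rewrite expn1; case/andP: zb.
  have i0 : (0 < p ^ 1)%N by rewrite expn1.
  move=> H; have := congr1 (fun A : 'M[int]_(p ^ 1) => A (Ordinal i0) (Ordinal zp1)) H; rewrite !mxE /=.
  have -> : (z == 0%N) = false by case/andP: zb; rewrite lt0n => /negbTE.
  rewrite adjf0 //; case/(E1 _ _ p0) => k hk.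
  by have := zn k; rewrite hk eqxx.
case=> [|m] // m1 /=.
have m0 : (0 < m)%N by [].
set K := (p ^ m)%N.
have MK : (p ^ m.+1 = p * K)%N by rewrite expnS.
have K0 : (0 < K)%N by rewrite expn_gt0 p0.
pose r := `|(q %% (p ^ m.+1)%N%:Z)%Z|%N.
have qr : (q = r%:Z %[mod (p ^ m.+1)%N])%Z by apply: choose_r; rewrite expn_gt0 p0.
have qrm : (q = r%:Z %[mod (p ^ m)%N])%Z.
  by apply: (@modz_sub q r (p ^ m.+1)) => //; rewrite dvdn_exp2l.
have qrp : (q = r%:Z %[mod p])%Z.
  by apply: (@modz_sub q r (p ^ m.+1)) => //; rewrite expnS dvdn_mulr.
have cr : coprime r p := @coprime_r q p r hp hq qrp.
have EM : forall x z, (x < p ^ m.+1)%N -> (edge p m.+1 q x z <->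
    exists y, (y %% K = x %% K)%N /\ (r ^ y %% p ^ m.+1)%N = z).
  by move=> x z xM; rewrite (@edgeE p m.+1 q r qr); apply: Ered.
have EK : forall x z, edge p m q x z <-> E K r x z.
  by move=> x z; rewrite (@edgeE p m q r qrm).
exists (fun b : 'I_p => \matrix_(i, j) adjf p m.+1 q i (b * K + j)).
split.
  move=> a b i j; rewrite mxE; apply: adjf_ext.
  have bM : forall (c : 'I_p) (u : 'I_K), (c * K + u < p ^ m.+1)%N.
    move=> c u; rewrite MK; apply: (leq_trans _ (leq_mul (ltn_ord c) (leqnn K))).
    by rewrite mulSn (addnC K) ltn_add2l.
  have iM : (i < p ^ m.+1)%N by apply: leq_ltn_trans (bM a i); exact: leq_addl.
  by rewrite (EM _ _ (bM a i)) (EM _ _ iM) modnMDl.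
apply/matrixP => i j; rewrite summxE mxE.
under eq_bigr do rewrite mxE.
have iM : (i < p ^ m.+1)%N by rewrite MK; apply: (leq_trans (ltn_ord i)); exact: leq_pmull.
case: (classic (E K r i j)) => h; last first.
  rewrite adjf0; last by move/EK.
  apply: big1 => b _; apply: adjf0 => /(EM _ _ iM) [y [h1 h2]]; apply: h.
  exists y; split; first by rewrite h1 modn_small.
  by rewrite -(@modn_dvdm (p ^ m.+1)) ?dvdn_exp2l // h2 modnMDl modn_small.
rewrite adjf1; last by apply/EK.
case: h => y0 [h01 h02].
set z0 := (r ^ y0 %% p ^ m.+1)%N.
have z0M : (z0 < p * K)%N by rewrite -MK ltn_mod expn_gt0 p0.
have b0p : (z0 %/ K < p)%N by rewrite ltn_divLR // mulnC.
have z0E : z0 = (z0 %/ K * K + j)%N.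
  rewrite {1}(divn_eq z0 K); congr (_ + _)%N.
  by rewrite /z0 modn_dvdm ?dvdn_exp2l.

rewrite (bigD1 (Ordinal b0p)) //= big1 ?addr0.
  apply: adjf1; apply/(EM _ _ iM); exists y0; split; first by rewrite h01 modn_small.
  by rewrite -/z0 {1}z0E.
move=> b bb0; apply: adjf0 => /(EM _ _ iM) [y1 [h11 h12]].
move/negP: bb0; apply; apply/eqP; apply: val_inj => /=.
have u : (r ^ y0 = r ^ y1 %[mod p ^ m.+1])%N.
  apply: uniqA => //; first by rewrite h01 h11 modn_small.
  rewrite h02 -(@modn_dvdm (p ^ m.+1)) ?dvdn_exp2l // h12.
  by rewrite modnMDl modn_small.
apply/eqP; rewrite -(eqn_pmul2r K0) -(eqn_add2r j) -z0E /z0 u h12 //.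
Qed.
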